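(* Let $G$ be a flag with vertices $v_1,\dots,v_n$ ordered by increasing $x$-coordinate, and let $i<j<k$. If $(v_i,v_j,v_k)$ is a good upper triplet, then every edge of $G[V^-(v_jv_k)]$ is disjoint from $v_iv_j$ and related to $v_iv_j$. If $(v_i,v_j,v_k)$ is a good lower triplet, then every edge of $G[V^+(v_jv_k)]$ is disjoint from $v_iv_j$ and related to $v_iv_j$.
   Context: Let $\mathcal C=S^1\times\mathbb R$ ($S^1=[0,1]$ with $0\sim1$), points $p=(p_x,p_y)$ with $0\le p_x<1$. A flag is a graph drawn on $\mathcal C$ (vertices distinct points, edges Jordan arcs, no overlapping edges, no edge through a vertex) that is complete, simple (any two edges meet in at most one point: a common endpoint or a proper crossing), monotone (every edge meets each vertical line $l_{x=a}=\{p:p_x=a\}$ at most once, no two vertices share an $x$-coordinate, no vertex has $x$-coordinate $0$), and such that $l_{x=0}$ meets every edge in its relative interior. A point $v$ is related to an $x$-monotone curve $e$ if $l_{x=v_x}$ meets $e$ in its relative interior; then $v$ is below (above) $e$ if $v_y$ is smaller (larger) than the $y$-coordinate of $l_{x=v_x}\cap e$. Two $x$-monotone curves $e,f$ are related if they do not cross, some vertical line meets both relative interiors, and all such lines meet them in the same vertical order; then $e\prec f$ means that on every vertical line meeting both relative interiors, $e$'s point has $y$-coordinate at most that of $f$'s point. For $i<j$, $V^+(v_iv_j)=\{v_s: s>j,\ v_s \text{ above } v_iv_j\}$ and $V^-(v_iv_j)=\{v_s: s>j,\ v_s \text{ below } v_iv_j\}$. For $i<j<k$, $(v_i,v_j,v_k)$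 is a good upper triplet if $v_jv_k\prec v_iv_j$ and $|V^+(v_jv_k)|\le1$, and a good lower triplet if $v_iv_j\prec v_jv_k$ and $|V^-(v_jv_k)|\le1$. Two edges are disjoint if they share no point; $G[U]$ denotes the induced subgraph. *)

(* Defs.v *)
From Stdlib Require Import Reals Lra Arith.
Open Scope R_scope.

(** * The cylinder C = S^1 x R, with S^1 = [0,1] / (0 ~ 1).
    A point of C is a pair (x,y) with 0 <= x < 1.  The covering map
    R^2 -> C is [proj (x,y) = (frac x, y)]. *)
Definition pt := (R * R)%type.
Definition proj (p : pt) : pt := (frac_part (fst p), snd p).

(** A curve on C is given by a lift [e : R -> R^2] of a continuous map
    [0,1] -> C (every continuous map from [0,1] to C lifts, and every continuous
    map on [0,1] extends continuously to R, so this loses no generality).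
    The curve itself is [proj o e] restricted to [0,1]; its relative interior
    is the image of (0,1). *)
Definition curve := R -> pt.

Definition in01 (s : R) := 0 <= s <= 1.
Definition in01o (s : R) := 0 < s < 1.

Definition on_curve (p : pt) (e : curve) := exists s, in01 s /\ proj (e s) = p.
Definition on_relint (p : pt) (e : curve) := exists s, in01o s /\ proj (e s) = p.

Definition jordan_arc (e : curve) (p q : pt) :=
  continuity (fun s => fst (e s)) /\ continuity (fun s => snd (e s)) /\
  (forall s t, in01 s -> in01 t -> proj (e s) = proj (e t) -> s = t) /\
  proj (e 0) = p /\ proj (e 1) = q.

Definition x_monotone (e : curve) :=
  forall s t, in01 s -> in01 t ->
    frac_part (fst (e s)) = frac_part (fst (e t)) -> s = t.

Definition meets_line_relint (a : R) (e : curve) :=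
  exists s, in01o s /\ frac_part (fst (e s)) = a.

Definition pt_related (v : pt) (e : curve) := meets_line_relint (fst v) e.
Definition pt_below (v : pt) (e : curve) :=
  exists s, in01o s /\ frac_part (fst (e s)) = fst v /\ snd v < snd (e s).
Definition pt_above (v : pt) (e : curve) :=
  exists s, in01o s /\ frac_part (fst (e s)) = fst v /\ snd (e s) < snd v.

(** Points on the
    same vertical line near the crossing are those whose lifted x-coordinates moved
    by the same amount from the crossing. *)
Definition switch_side (e f : curve) (s0 t0 d : R) :=
  forall s t, in01o s -> in01o t ->
    Rabs (fst (e s) - fst (e s0)) < d ->
    fst (e s) - fst (e s0) = fst (f t) - fst (f t0) ->
    (fst (e s) < fst (e s0) -> snd (e s) < snd (f t)) /\
    (fst (e s0) < fst (e s) -> snd (f t) < snd (e s)).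

Definition crosses_at (e f : curve) (s0 t0 : R) :=
  in01o s0 /\ in01o t0 /\ proj (e s0) = proj (f t0) /\
  exists d, 0 < d /\ (switch_side e f s0 t0 d \/ switch_side f e t0 s0 d).

Definition cross (e f : curve) := exists s0 t0, crosses_at e f s0 t0.

Definition common_line (e f : curve) :=
  exists s t, in01o s /\ in01o t /\
    frac_part (fst (e s)) = frac_part (fst (f t)).

Definition below_all (e f : curve) :=
  forall s t, in01o s -> in01o t ->
    frac_part (fst (e s)) = frac_part (fst (f t)) -> snd (e s) <= snd (f t).

Definition related_curves (e f : curve) :=
  ~ cross e f /\ common_line e f /\ (below_all e f \/ below_all f e).

Definition prec (e f : curve) := related_curves e f /\ below_all e f.

Definition disjoint_curves (e f : curve) :=
  forall p, on_curve p e -> on_curve p f -> False.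

(** * Flags.  Vertices v 1, ..., v n (ordered by increasing x-coordinate);
    for 1 <= i < j <= n, [E i j] is the edge v_i v_j (complete graph). *)
Definition is_edge (n i j : nat) := (1 <= i)%nat /\ (i < j)%nat /\ (j <= n)%nat.

Definition is_flag (n : nat) (v : nat -> pt) (E : nat -> nat -> curve) :=
  (forall i, (1 <= i <= n)%nat -> 0 < fst (v i) < 1) /\
  (forall i j, is_edge n i j -> fst (v i) < fst (v j)) /\
  (forall i j, is_edge n i j -> jordan_arc (E i j) (v i) (v j)) /\
  (forall i j, is_edge n i j -> x_monotone (E i j)) /\
  (forall i j k, is_edge n i j -> (1 <= k <= n)%nat -> ~ on_relint (v k) (E i j)) /\
  (forall i j k l, is_edge n i j -> is_edge n k l -> (i, j) <> (k, l) ->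
     forall p q, on_curve p (E i j) -> on_curve p (E k l) ->
                 on_curve q (E i j) -> on_curve q (E k l) -> p = q) /\
  (forall i j k l, is_edge n i j -> is_edge n k l -> (i, j) <> (k, l) ->
     forall p, on_curve p (E i j) -> on_curve p (E k l) ->
       ((p = v i \/ p = v j) /\ (p = v k \/ p = v l)) \/
       (exists s t, crosses_at (E i j) (E k l) s t /\ proj (E i j s) = p)) /\
  (forall i j, is_edge n i j -> meets_line_relint 0 (E i j)).

Definition Vplus (n : nat) (v : nat -> pt) (E : nat -> nat -> curve) (j k s : nat) :=
  (k < s <= n)%nat /\ pt_above (v s) (E j k).
Definition Vminus (n : nat) (v : nat -> pt) (E : nat -> nat -> curve) (j k s : nat) :=
  (k < s <= n)%nat /\ pt_below (v s) (E j k).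

Definition card_le1 (P : nat -> Prop) := forall s t, P s -> P t -> s = t.

Definition good_upper n v E (i j k : nat) :=
  prec (E j k) (E i j) /\ card_le1 (Vplus n v E j k).
Definition good_lower n v E (i j k : nat) :=
  prec (E i j) (E j k) /\ card_le1 (Vminus n v E j k).

(* Main.v *)
Require Import Defs.
From Stdlib Require Import Reals Arith.
From Stdlib Require Import Lra Lia ZArith Ranalysis5 ClassicalEpsilon Classical.
Open Scope R_scope.


Lemma frac_char (x : R) (z : Z) : IZR z <= x < IZR z + 1 -> frac_part x = x - IZR z.
Proof.
  intros [H1 H2]. unfold frac_part, Int_part.
  assert (E : (z + 1)%Z = up x).
  { apply tech_up; rewrite plus_IZR; simpl; lra. }
  rewrite <- E. replace (z + 1 - 1)%Z with z by lia. reflexivity.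
Qed.

Lemma frac_shift (x : R) (z : Z) : frac_part (x + IZR z) = frac_part x.
Proof.
  pose proof (base_Int_part x) as [H1 H2].
  rewrite (frac_char (x + IZR z) (Int_part x + z)).
  - unfold frac_part. rewrite plus_IZR. ring.
  - rewrite plus_IZR. lra.
Qed.

Lemma frac_eq (x y : R) : frac_part x = frac_part y -> exists z : Z, x = y + IZR z.
Proof.
  unfold frac_part. intros H. exists (Int_part x - Int_part y)%Z.
  rewrite minus_IZR. lra.
Qed.

Lemma frac_id (x : R) : 0 <= x < 1 -> frac_part x = x.
Proof. intros H. rewrite (frac_char x 0); simpl; lra. Qed.

Lemma frac_bnd (x : R) : 0 <= frac_part x < 1.
Proof. pose proof (base_fp x). lra. Qed.

Lemma frac_int (x : R) : exists z : Z, x = frac_part x + IZR z.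
Proof. exists (Int_part x). unfold frac_part. ring. Qed.


Lemma ivt_any (f : R -> R) (a b y : R) : a <= b ->
  (forall x, a <= x <= b -> continuity_pt f x) ->
  (f a <= y <= f b \/ f b <= y <= f a) -> exists x, a <= x <= b /\ f x = y.
Proof.
  intros Hab Hc Hy. destruct (Req_dec a b) as [E|Hne].
  { subst. exists b. split; [lra|]. lra. }
  assert (Hlt : a < b) by lra.
  destruct Hy as [Hy|Hy].
  - destruct (f_interv_is_interv f a b y Hlt Hy Hc) as [x Hx]. exists x; tauto.
  - assert (Hy' : (fun x => - f x) a <= - y <= (fun x => - f x) b) by (simpl; lra).
    destruct (f_interv_is_interv (fun x => - f x) a b (- y) Hlt Hy') as [x Hx].
    + intros x Hx. apply continuity_pt_opp. auto.
    + exists x. split; [tauto|]. destruct Hx as [_ Hx]. lra.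
Qed.

Section Mono.
Variable X : R -> R.
Hypothesis Xc : continuity X.
Hypothesis Xinj : forall u w, in01 u -> in01 w -> X u = X w -> u = w.

Lemma betw u w z : in01 u -> in01 z -> u < w -> w < z ->
  (X u < X w < X z) \/ (X z < X w < X u).
Proof.
  intros Hu Hz Huw Hwz. unfold in01 in *.
  assert (Hw : in01 w) by (unfold in01; lra).
  assert (N1 : X u <> X w) by (intro E; apply Xinj in E; unfold in01 in *; lra).
  assert (N2 : X w <> X z) by (intro E; apply Xinj in E; unfold in01 in *; lra).
  assert (N3 : X u <> X z) by (intro E; apply Xinj in E; unfold in01 in *; lra).
  destruct (Rlt_or_le (X u) (X w)) as [A1|A1];
  destruct (Rlt_or_le (X w) (X z)) as [A2|A2]; try (left; lra); try (right; lra).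
  -
    exfalso. destruct (Rlt_or_le (X u) (X z)) as [A3|A3].
    + destruct (ivt_any X u w (X z)) as [w' [Hw' E]]; [lra| intros; apply Xc | left; lra |].
      apply Xinj in E; unfold in01 in *; lra.
    + destruct (ivt_any X w z (X u)) as [w' [Hw' E]]; [lra| intros; apply Xc | right; lra |].
      apply Xinj in E; unfold in01 in *; lra.
  - exfalso. destruct (Rlt_or_le (X u) (X z)) as [A3|A3].
    + destruct (ivt_any X w z (X u)) as [w' [Hw' E]]; [lra| intros; apply Xc | left; lra |].
      apply Xinj in E; unfold in01 in *; lra.
    + destruct (ivt_any X u w (X z)) as [w' [Hw' E]]; [lra| intros; apply Xc | right; lra |].
      apply Xinj in E; unfold in01 in *; lra.
Qed.

Lemma mono_dec : X 1 < X 0 -> forall u w, in01 u -> in01 w -> u < w -> X w < X u.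
Proof.
  intros H01 u w Hu Hw Huw. unfold in01 in *.
  assert (I0 : in01 0) by (unfold in01; lra). assert (I1 : in01 1) by (unfold in01; lra).
  destruct (Req_dec u 0) as [E0|E0]; destruct (Req_dec w 1) as [E1|E1].
  - subst. lra.
  - subst. destruct (betw 0 w 1) as [B|B]; auto; lra.
  - subst. destruct (betw 0 u 1) as [B|B]; auto; lra.
  - destruct (betw 0 u 1) as [B1|B1]; auto; try lra.
    destruct (betw 0 u w) as [B2|B2]; auto; try lra; unfold in01; lra.
Qed.

Lemma mono_inc : X 0 < X 1 -> forall u w, in01 u -> in01 w -> u < w -> X u < X w.
Proof.
  intros H01 u w Hu Hw Huw. unfold in01 in *.
  assert (I0 : in01 0) by (unfold in01; lra). assert (I1 : in01 1) by (unfold in01; lra).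
  destruct (Req_dec u 0) as [E0|E0]; destruct (Req_dec w 1) as [E1|E1].
  - subst. lra.
  - subst. destruct (betw 0 w 1) as [B|B]; auto; lra.
  - subst. destruct (betw 0 u 1) as [B|B]; auto; lra.
  - destruct (betw 0 u 1) as [B1|B1]; auto; try lra.
    destruct (betw 0 u w) as [B2|B2]; auto; try lra; unfold in01; lra.
Qed.
End Mono.

Lemma IZR_lt_p1 (a b : Z) : IZR a < IZR b + 1 -> (a <= b)%Z.
Proof. intros H. assert (IZR a < IZR (b + 1)) by (rewrite plus_IZR; simpl; lra).
  apply lt_IZR in H0. lia. Qed.

Lemma edge_norm (e : curve) (xa xb ya yb : R) : 0 < xa -> xa < xb -> xb < 1 ->
  continuity (fun s => fst (e s)) -> x_monotone e ->
  proj (e 0) = (xa, ya) -> proj (e 1) = (xb, yb) -> meets_line_relint 0 e ->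
  exists z : Z, fst (e 0) - IZR z = 1 + xa /\ fst (e 1) - IZR z = xb /\
    forall u w, in01 u -> in01 w -> u < w -> fst (e w) < fst (e u).
Proof.
  intros Ha Hab Hb Hc Hm P0 P1 [u0 [Hu0 F0]].
  set (X := fun s => fst (e s)).
  assert (Xinj : forall u w, in01 u -> in01 w -> X u = X w -> u = w).
  { intros u w Hu Hw E. apply Hm; auto. unfold X in E. rewrite E. reflexivity. }
  assert (I0 : in01 0) by (unfold in01; lra). assert (I1 : in01 1) by (unfold in01; lra).
  assert (Iu0 : in01 u0) by (unfold in01, in01o in *; lra).
  unfold proj in P0, P1. injection P0 as F0a _. injection P1 as F1a _.
  destruct (frac_int (X 0)) as [m0 M0]. destruct (frac_int (X 1)) as [m1 M1].
  destruct (frac_int (X u0)) as [n0 N0].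
  unfold X in M0, M1, N0. rewrite F0a in M0. rewrite F1a in M1. rewrite F0 in N0.
  assert (M0' : X 0 = xa + IZR m0) by exact M0.
  assert (M1' : X 1 = xb + IZR m1) by exact M1.
  assert (N0' : X u0 = 0 + IZR n0) by exact N0.
  clear M0 M1 N0. rename M0' into M0. rename M1' into M1. rename N0' into N0.
  assert (Hne : X 0 <> X 1) by (intro E; apply Xinj in E; auto; lra).
  assert (W : forall a b, in01 a -> in01 b -> X b - X a < 1).
  { intros a b Ha' Hb'. destruct (Rlt_or_le (X b - X a) 1) as [L|L]; auto. exfalso.
    destruct (Rle_lt_dec a b) as [Lab|Lab].
    - assert (Hy : X a <= X a + 1 <= X b \/ X b <= X a + 1 <= X a) by (left; lra).
      destruct (ivt_any X a b (X a + 1) Lab (fun x _ => Hc x) Hy) as [w [Hw E]].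
      assert (w = a).
      { apply Hm; unfold in01 in *; try lra. unfold X in E. rewrite E.
        change 1 with (IZR 1). apply frac_shift. }
      subst. lra.
    - assert (Hy : X b <= X a + 1 <= X a \/ X a <= X a + 1 <= X b) by (right; lra).
      destruct (ivt_any X b a (X a + 1) ltac:(lra) (fun x _ => Hc x) Hy) as [w [Hw E]].
      assert (w = a).
      { apply Hm; unfold in01 in *; try lra. unfold X in E. rewrite E.
        change 1 with (IZR 1). apply frac_shift. }
      subst. lra. }
  destruct (Rlt_or_le (X 1) (X 0)) as [D|D].
  - pose proof (mono_dec X Hc Xinj D) as MD.
    assert (A1 : X u0 < X 0) by (apply MD; unfold in01o in *; auto; lra).
    assert (A2 : X 1 < X u0) by (apply MD; unfold in01o in *; auto; lra).
    pose proof (W 1 0 I1 I0) as W1.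
    assert (Z1 : (n0 <= m0)%Z) by (apply IZR_lt_p1; lra).
    assert (Z2 : (m1 + 1 <= n0)%Z) by (apply IZR_lt_p1; rewrite plus_IZR; simpl; lra).
    assert (Z3 : (m0 <= m1 + 1)%Z) by (apply IZR_lt_p1; rewrite plus_IZR; simpl; lra).
    exists (m0 - 1)%Z. rewrite minus_IZR. simpl. split; [change (X 0 - (IZR m0 - 1) = 1 + xa); lra|].
    split.
    + assert (m1 = m0 - 1)%Z by lia. subst m1. change (X 1 - (IZR m0 - 1) = xb). rewrite M1, minus_IZR. simpl. lra.
    + exact MD.
  - exfalso. assert (D' : X 0 < X 1) by lra.
    pose proof (mono_inc X Hc Xinj D') as MI.
    assert (A1 : X 0 < X u0) by (apply MI; unfold in01o in *; auto; lra).
    assert (A2 : X u0 < X 1) by (apply MI; unfold in01o in *; auto; lra).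
    pose proof (W 0 1 I0 I1) as W1.
    assert (Z1 : (m0 + 1 <= n0)%Z) by (apply IZR_lt_p1; rewrite plus_IZR; simpl; lra).
    assert (Z2 : (n0 <= m1)%Z) by (apply IZR_lt_p1; lra).
    assert (IZR (m0 + 1) <= IZR m1) by (apply IZR_le; lia).
    rewrite plus_IZR in H. simpl in H. lra.
Qed.


Definition Ginv (e : curve) (c X : R) : R :=
  epsilon (inhabits 0) (fun u => in01 u /\ fst (e u) - c = X).
Definition Hgt (e : curve) (c X : R) : R := snd (e (Ginv e c X)).

Record edata (e : curve) (c lo hi : R) : Prop := {
  ed_lohi : lo < hi;
  ed_xc : continuity (fun s => fst (e s));
  ed_yc : continuity (fun s => snd (e s));
  ed_dec : forall u w, in01 u -> in01 w -> u < w -> fst (e w) < fst (e u);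
  ed_0 : fst (e 0) - c = hi;
  ed_1 : fst (e 1) - c = lo }.

Section Inv.
Variables (e : curve) (c lo hi : R).
Hypothesis D : edata e c lo hi.

Lemma Xh_range u : in01 u -> lo <= fst (e u) - c <= hi.
Proof.
  intros Hu. pose proof (ed_0 _ _ _ _ D). pose proof (ed_1 _ _ _ _ D).
  unfold in01 in Hu. split.
  - destruct (Req_dec u 1) as [E|E]; [subst; lra|].
    assert (fst (e 1) < fst (e u)) by (apply (ed_dec _ _ _ _ D); unfold in01; lra). lra.
  - destruct (Req_dec u 0) as [E|E]; [subst; lra|].
    assert (fst (e u) < fst (e 0)) by (apply (ed_dec _ _ _ _ D); unfold in01; lra). lra.
Qed.

Lemma Xh_open u : in01o u -> lo < fst (e u) - c < hi.
Proof.
  intros Hu. pose proof (ed_0 _ _ _ _ D). pose proof (ed_1 _ _ _ _ D).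
  unfold in01o in Hu. split.
  - assert (fst (e 1) < fst (e u)) by (apply (ed_dec _ _ _ _ D); unfold in01; lra). lra.
  - assert (fst (e u) < fst (e 0)) by (apply (ed_dec _ _ _ _ D); unfold in01; lra). lra.
Qed.

Lemma Xh_inj u w : in01 u -> in01 w -> fst (e u) = fst (e w) -> u = w.
Proof.
  intros Hu Hw E. destruct (Rtotal_order u w) as [L|[L|L]]; auto.
  - pose proof (ed_dec _ _ _ _ D u w Hu Hw L). lra.
  - pose proof (ed_dec _ _ _ _ D w u Hw Hu L). lra.
Qed.

Lemma G_spec X : lo <= X <= hi -> in01 (Ginv e c X) /\ fst (e (Ginv e c X)) - c = X.
Proof.
  intros HX. unfold Ginv. apply epsilon_spec.
  pose proof (ed_0 _ _ _ _ D). pose proof (ed_1 _ _ _ _ D).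
  destruct (ivt_any (fun s => fst (e s) - c) 0 1 X) as [u [Hu E]].
  - lra.
  - intros. apply continuity_pt_minus; [apply (ed_xc _ _ _ _ D)| apply continuity_pt_const; intros a b; auto].
  - right. simpl. lra.
  - exists u. split; [exact Hu| exact E].
Qed.

Lemma G_Xh u : in01 u -> Ginv e c (fst (e u) - c) = u.
Proof.
  intros Hu. destruct (G_spec (fst (e u) - c)) as [H1 H2]; [apply Xh_range; auto|].
  apply Xh_inj; auto. lra.
Qed.

Lemma G_open X : lo < X < hi -> in01o (Ginv e c X).
Proof.
  intros HX. destruct (G_spec X) as [H1 H2]; [lra|].
  pose proof (ed_0 _ _ _ _ D). pose proof (ed_1 _ _ _ _ D).
  unfold in01 in H1. unfold in01o. split.
  - destruct (Req_dec (Ginv e c X) 0) as [E|E]; [rewrite E in H2; lra| lra].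
  - destruct (Req_dec (Ginv e c X) 1) as [E|E]; [rewrite E in H2; lra| lra].
Qed.

Lemma G_cont X : lo < X < hi -> continuity_pt (Ginv e c) X.
Proof.
  intros HX.
  pose proof (ed_0 _ _ _ _ D). pose proof (ed_1 _ _ _ _ D).
  set (f := fun u => - (fst (e u) - c)).
  set (g := fun y => Ginv e c (- y)).
  assert (Cg : continuity_pt g (- X)).
  { apply (continuity_pt_recip_interv f g 0 1 ltac:(lra)).
    - intros x y Hx Hxy Hy. unfold f.
      pose proof (ed_dec _ _ _ _ D x y ltac:(unfold in01; lra) ltac:(unfold in01; lra) Hxy). lra.
    - intros x Hx1 Hx2. unfold comp, f, g, id. unfold f in Hx1, Hx2.
      destruct (G_spec (- x)) as [_ E]; lra.
    - intros x Hx1 Hx2. unfold f in Hx1, Hx2. unfold g.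
      destruct (G_spec (- x)) as [E _]; [lra|]. exact E.
    - intros a Ha. unfold f. apply continuity_pt_opp. apply continuity_pt_minus.
      + apply (ed_xc _ _ _ _ D).
      + apply continuity_pt_const. intros p q; auto.
    - unfold f. lra. }
  assert (C2 : continuity_pt (comp g (fun x => - x)) X).
  { apply continuity_pt_comp; [|exact Cg].
    apply continuity_pt_opp. apply derivable_continuous_pt. apply derivable_pt_id. }
  apply (continuity_pt_locally_ext (comp g (fun x => - x)) (Ginv e c) 1 X ltac:(lra)); [|exact C2].
  intros y _. unfold comp, g. rewrite Ropp_involutive. reflexivity.
Qed.

Lemma H_cont X : lo < X < hi -> continuity_pt (Hgt e c) X.
Proof.
  intros HX. unfold Hgt.
  apply (continuity_pt_comp (Ginv e c) (fun s => snd (e s)) X); [apply G_cont; auto|].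
  apply (ed_yc _ _ _ _ D).
Qed.

Lemma H_Xh u : in01 u -> Hgt e c (fst (e u) - c) = snd (e u).
Proof. intros Hu. unfold Hgt. rewrite G_Xh; auto. Qed.
End Inv.


Lemma persist (phi : R -> R) (u0 : R) : continuity_pt phi u0 -> phi u0 < 0 ->
  exists del, 0 < del /\ forall u, Rabs (u - u0) < del -> phi u < 0.
Proof.
  intros Hc Hn. unfold continuity_pt, continue_in, limit1_in, limit_in in Hc.
  destruct (Hc (- phi u0) ltac:(lra)) as [alp [Ha Hb]].
  exists alp. split; [lra|]. intros u Hu.
  destruct (Req_dec u u0) as [E|E]; [subst; lra|].
  assert (Hd : Rabs (phi u - phi u0) < - phi u0).
  { apply (Hb u). split; [split; [exact I| auto]|]. simpl. unfold Rdist. exact Hu. }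
  apply Rabs_def2 in Hd. lra.
Qed.

Lemma cont_lin (A B : R -> R) (sg x : R) : continuity_pt A x -> continuity_pt B x ->
  continuity_pt (fun u => sg * (A u - B u)) x.
Proof.
  intros HA HB.
  assert (C : continuity_pt (mult_real_fct sg (A - B)%F) x).
  { apply continuity_pt_scal. apply continuity_pt_minus; auto. }
  apply (continuity_pt_locally_ext (mult_real_fct sg (A - B)%F) (fun u => sg * (A u - B u)) 1 x ltac:(lra)); [|exact C].
  intros y _. unfold mult_real_fct, minus_fct. reflexivity.
Qed.

Lemma cont_affine (A : R -> R) (k x : R) : continuity_pt A x ->
  continuity_pt (fun u => A u + k) x.
Proof.
  intros HA.
  assert (C : continuity_pt (A + fct_cte k)%F x).
  { apply continuity_pt_plus; auto. apply continuity_pt_const. intros a b; reflexivity. }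
  apply (continuity_pt_locally_ext (A + fct_cte k)%F (fun u => A u + k) 1 x ltac:(lra)); [|exact C].
  intros y _. unfold plus_fct, fct_cte. reflexivity.
Qed.

Lemma cont_sub (A : R -> R) (k x : R) : continuity_pt A x ->
  continuity_pt (fun u => A u - k) x.
Proof. intros HA. apply (cont_affine A (- k) x HA). Qed.

Definition sgn (sg : R) := sg = 1 \/ sg = -1.

Section Pair.
Variables (e : curve) (ce loe hie : R) (f : curve) (cf lof hif : R).
Hypothesis De : edata e ce loe hie.
Hypothesis Df : edata f cf lof hif.

Lemma end0 (D sg : R) : lof < hie - D < hif ->
  sg * (snd (e 0) - Hgt f cf (hie - D)) < 0 ->
  forall eta, 0 < eta -> exists X, hie - D - eta < X < hie - D /\ lof < X /\ loe < X + D /\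
    sg * (Hgt e ce (X + D) - Hgt f cf X) < 0.
Proof.
  intros Hr Hs eta Heta.
  pose proof (ed_0 _ _ _ _ De) as E0.
  set (phi := fun u => sg * (snd (e u) - Hgt f cf (fst (e u) - ce - D))).
  assert (Cphi : continuity_pt phi 0).
  { unfold phi. apply cont_lin.
    - apply (ed_yc _ _ _ _ De).
    - apply (continuity_pt_comp (fun u => fst (e u) - ce - D) (Hgt f cf) 0).
      + apply cont_sub. apply cont_sub. apply (ed_xc _ _ _ _ De).
      + apply (H_cont f cf lof hif Df). lra. }
  destruct (persist phi 0 Cphi) as [d1 [Hd1 P1]].
  { unfold phi. rewrite E0. replace (hie + ce - ce - D) with (hie - D) by ring. 
    replace (fst (e 0) - ce - D) with (hie - D) by lra. exact Hs. }
  set (eps := Rmin eta (hie - D - lof)).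
  assert (Heps : 0 < eps) by (unfold eps; apply Rmin_pos; lra).
  set (psi := fun u => 1 * ((hie - D - eps) - (fst (e u) - ce - D))).
  assert (Cpsi : continuity_pt psi 0).
  { unfold psi. apply cont_lin.
    - apply continuity_pt_const. intros a b; reflexivity.
    - apply cont_sub. apply cont_sub. apply (ed_xc _ _ _ _ De). }
  destruct (persist psi 0 Cpsi) as [d2 [Hd2 P2]].
  { unfold psi. lra. }
  set (u := Rmin (Rmin d1 d2) 1 / 2).
  assert (Hu1 : 0 < u).
  { unfold u. assert (0 < Rmin (Rmin d1 d2) 1) by (repeat apply Rmin_pos; lra). lra. }
  assert (Hu2 : u <= 1/2) by (unfold u; pose proof (Rmin_r (Rmin d1 d2) 1); lra).
  assert (Hu3 : u < d1) by (unfold u; pose proof (Rmin_l (Rmin d1 d2) 1);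
     pose proof (Rmin_l d1 d2); pose proof (Rmin_r d1 d2); lra).
  assert (Hu4 : u < d2) by (unfold u; pose proof (Rmin_l (Rmin d1 d2) 1);
     pose proof (Rmin_l d1 d2); pose proof (Rmin_r d1 d2); lra).
  assert (Iu : in01o u) by (unfold in01o; lra).
  pose proof (Xh_open e ce loe hie De u Iu) as Ho.
  specialize (P1 u ltac:(rewrite Rminus_0_r, Rabs_right; lra)).
  specialize (P2 u ltac:(rewrite Rminus_0_r, Rabs_right; lra)).
  unfold phi, psi in *.
  exists (fst (e u) - ce - D).
  assert (eps <= eta) by apply Rmin_l. assert (eps <= hie - D - lof) by apply Rmin_r.
  split; [lra|]. split; [lra|]. split; [lra|].
  replace (fst (e u) - ce - D + D) with (fst (e u) - ce) by ring.
  rewrite (H_Xh e ce loe hie De u) by (unfold in01, in01o in *; lra). exact P1.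
Qed.

Lemma end1 (D sg : R) : lof < loe - D < hif ->
  sg * (snd (e 1) - Hgt f cf (loe - D)) < 0 ->
  forall eta, 0 < eta -> exists X, loe - D < X < loe - D + eta /\ X < hif /\ X + D < hie /\
    sg * (Hgt e ce (X + D) - Hgt f cf X) < 0.
Proof.
  intros Hr Hs eta Heta.
  pose proof (ed_1 _ _ _ _ De) as E1.
  set (phi := fun u => sg * (snd (e u) - Hgt f cf (fst (e u) - ce - D))).
  assert (Cphi : continuity_pt phi 1).
  { unfold phi. apply cont_lin.
    - apply (ed_yc _ _ _ _ De).
    - apply (continuity_pt_comp (fun u => fst (e u) - ce - D) (Hgt f cf) 1).
      + apply cont_sub. apply cont_sub. apply (ed_xc _ _ _ _ De).
      + apply (H_cont f cf lof hif Df). lra. }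
  destruct (persist phi 1 Cphi) as [d1 [Hd1 P1]].
  { unfold phi. replace (fst (e 1) - ce - D) with (loe - D) by lra. exact Hs. }
  set (eps := Rmin eta (hif - (loe - D))).
  assert (Heps : 0 < eps) by (unfold eps; apply Rmin_pos; lra).
  set (psi := fun u => 1 * ((fst (e u) - ce - D) - (loe - D + eps))).
  assert (Cpsi : continuity_pt psi 1).
  { unfold psi. apply cont_lin.
    - apply cont_sub. apply cont_sub. apply (ed_xc _ _ _ _ De).
    - apply continuity_pt_const. intros a b; reflexivity. }
  destruct (persist psi 1 Cpsi) as [d2 [Hd2 P2]].
  { unfold psi. lra. }
  set (u := 1 - Rmin (Rmin d1 d2) 1 / 2).
  assert (Hu1 : u < 1).
  { unfold u. assert (0 < Rmin (Rmin d1 d2) 1) by (repeat apply Rmin_pos; lra). lra. }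
  assert (Hu2 : 1/2 <= u) by (unfold u; pose proof (Rmin_r (Rmin d1 d2) 1); lra).
  assert (Hu3 : 1 - u < d1) by (unfold u; pose proof (Rmin_l (Rmin d1 d2) 1);
     pose proof (Rmin_l d1 d2); pose proof (Rmin_r d1 d2);
     assert (0 < Rmin (Rmin d1 d2) 1) by (repeat apply Rmin_pos; lra); lra).
  assert (Hu4 : 1 - u < d2) by (unfold u; pose proof (Rmin_l (Rmin d1 d2) 1);
     pose proof (Rmin_l d1 d2); pose proof (Rmin_r d1 d2);
     assert (0 < Rmin (Rmin d1 d2) 1) by (repeat apply Rmin_pos; lra); lra).
  assert (Iu : in01o u) by (unfold in01o; lra).
  pose proof (Xh_open e ce loe hie De u Iu) as Ho.
  specialize (P1 u ltac:(rewrite Rabs_left; lra)).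
  specialize (P2 u ltac:(rewrite Rabs_left; lra)).
  unfold phi, psi in *.
  exists (fst (e u) - ce - D).
  assert (eps <= eta) by apply Rmin_l. assert (eps <= hif - (loe - D)) by apply Rmin_r.
  split; [lra|]. split; [lra|]. split; [lra|].
  replace (fst (e u) - ce - D + D) with (fst (e u) - ce) by ring.
  rewrite (H_Xh e ce loe hie De u) by (unfold in01, in01o in *; lra). exact P1.
Qed.

Lemma ivt2 (D a b : R) : a < b ->
  (forall X, a <= X <= b -> lof < X < hif /\ loe < X + D < hie) ->
  ((Hgt e ce (a + D) - Hgt f cf a < 0 /\ 0 < Hgt e ce (b + D) - Hgt f cf b) \/
   (0 < Hgt e ce (a + D) - Hgt f cf a /\ Hgt e ce (b + D) - Hgt f cf b < 0)) ->
  exists M, a < M < b /\ Hgt e ce (M + D) = Hgt f cf M.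
Proof.
  intros Hab Hr Hs.
  set (psi := fun X => 1 * (Hgt e ce (X + D) - Hgt f cf X)).
  destruct (ivt_any psi a b 0) as [M [HM E]].
  - lra.
  - intros X HX. destruct (Hr X HX) as [R1 R2]. unfold psi. apply cont_lin.
    + apply (continuity_pt_comp (fun X => X + D) (Hgt e ce) X).
      * apply cont_affine. apply derivable_continuous_pt. apply derivable_pt_id.
      * apply (H_cont e ce loe hie De). exact R2.
    + apply (H_cont f cf lof hif Df). exact R1.
  - unfold psi. lra.
  - unfold psi in E. exists M. destruct (Req_dec M a) as [Ea|Ea]; [subst; lra|].
    destruct (Req_dec M b) as [Eb|Eb]; [subst; lra|]. split; [lra|]. lra.
Qed.

Lemma cross_sides (D s0 t0 d : R) : in01o s0 -> in01o t0 -> 0 < d ->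
  (switch_side e f s0 t0 d \/ switch_side f e t0 s0 d) ->
  fst (e s0) - ce = fst (f t0) - cf + D ->
  forall eta, 0 < eta ->
  (exists X, Rabs (X - (fst (f t0) - cf)) < eta /\ lof < X < hif /\ loe < X + D < hie /\
     Hgt e ce (X + D) < Hgt f cf X) /\
  (exists X, Rabs (X - (fst (f t0) - cf)) < eta /\ lof < X < hif /\ loe < X + D < hie /\
     Hgt f cf X < Hgt e ce (X + D)).
Proof.
  intros Hs0 Ht0 Hd Hsw Hpos eta Heta.
  set (X0 := fst (f t0) - cf).
  pose proof (Xh_open e ce loe hie De s0 Hs0) as O1.
  pose proof (Xh_open f cf lof hif Df t0 Ht0) as O2.
  fold X0 in O2. rewrite Hpos in O1. fold X0 in O1.
  set (del := Rmin (Rmin (Rmin eta d) (Rmin (X0 - lof) (hif - X0)))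
                   (Rmin (X0 + D - loe) (hie - (X0 + D))) / 2).
  assert (Hdel : 0 < del).
  { unfold del. assert (0 < Rmin (Rmin (Rmin eta d) (Rmin (X0 - lof) (hif - X0)))
                   (Rmin (X0 + D - loe) (hie - (X0 + D)))) by (repeat apply Rmin_pos; lra). lra. }
  assert (Hb : del < eta /\ del < d /\ del < X0 - lof /\ del < hif - X0 /\
              del < X0 + D - loe /\ del < hie - (X0 + D)).
  { unfold del.
    pose proof (Rmin_l (Rmin (Rmin eta d) (Rmin (X0 - lof) (hif - X0)))
                   (Rmin (X0 + D - loe) (hie - (X0 + D)))).
    pose proof (Rmin_r (Rmin (Rmin eta d) (Rmin (X0 - lof) (hif - X0)))
                   (Rmin (X0 + D - loe) (hie - (X0 + D)))).
    pose proof (Rmin_l (Rmin eta d) (Rmin (X0 - lof) (hif - X0))).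
    pose proof (Rmin_r (Rmin eta d) (Rmin (X0 - lof) (hif - X0))).
    pose proof (Rmin_l eta d). pose proof (Rmin_r eta d).
    pose proof (Rmin_l (X0 - lof) (hif - X0)). pose proof (Rmin_r (X0 - lof) (hif - X0)).
    pose proof (Rmin_l (X0 + D - loe) (hie - (X0 + D))).
    pose proof (Rmin_r (X0 + D - loe) (hie - (X0 + D))).
    assert (0 < Rmin (Rmin (Rmin eta d) (Rmin (X0 - lof) (hif - X0)))
                   (Rmin (X0 + D - loe) (hie - (X0 + D)))) by (repeat apply Rmin_pos; lra).
    lra. }
  assert (G : forall ep, - del <= ep <= del ->
     in01o (Ginv e ce (X0 + ep + D)) /\ in01o (Ginv f cf (X0 + ep)) /\
     fst (e (Ginv e ce (X0 + ep + D))) - fst (e s0) = ep /\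
     fst (f (Ginv f cf (X0 + ep))) - fst (f t0) = ep).
  { intros ep Hep.
    destruct (G_spec e ce loe hie De (X0 + ep + D)) as [_ S1]; [lra|].
    destruct (G_spec f cf lof hif Df (X0 + ep)) as [_ S2]; [lra|].
    split; [apply (G_open e ce loe hie De); lra|].
    split; [apply (G_open f cf lof hif Df); lra|].
    unfold X0 in *. split; lra. }
  destruct (G del ltac:(lra)) as [Ip1 [Ip2 [Ep1 Ep2]]].
  destruct (G (- del) ltac:(lra)) as [Im1 [Im2 [Em1 Em2]]].
  assert (Rp : Rabs (X0 + del - X0) < eta) by (rewrite Rabs_right; lra).
  assert (Rm : Rabs (X0 + - del - X0) < eta) by (rewrite Rabs_left; lra).
  unfold Hgt.
  destruct Hsw as [Sw|Sw].
  - destruct (Sw _ _ Ip1 Ip2 ltac:(rewrite Ep1, Rabs_right; lra) ltac:(lra)) as [_ Sp].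
    destruct (Sw _ _ Im1 Im2 ltac:(rewrite Em1, Rabs_left; lra) ltac:(lra)) as [Sm _].
    split.
    + exists (X0 + - del). split; [exact Rm|]. split; [lra|]. split; [lra|]. apply Sm. lra.
    + exists (X0 + del). split; [exact Rp|]. split; [lra|]. split; [lra|]. apply Sp. lra.
  - destruct (Sw _ _ Ip2 Ip1 ltac:(rewrite Ep2, Rabs_right; lra) ltac:(lra)) as [_ Sp].
    destruct (Sw _ _ Im2 Im1 ltac:(rewrite Em2, Rabs_left; lra) ltac:(lra)) as [Sm _].
    split.
    + exists (X0 + del). split; [exact Rp|]. split; [lra|]. split; [lra|]. apply Sp. lra.
    + exists (X0 + - del). split; [exact Rm|]. split; [lra|]. split; [lra|]. apply Sm. lra.
Qed.
End Pair.


Lemma frac_lt1 X : 0 <= X < 1 -> frac_part X = X.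
Proof. apply frac_id. Qed.
Lemma frac_lt2 X : 1 <= X < 2 -> frac_part X = X - 1.
Proof. intros H. rewrite (frac_char X 1); simpl; lra. Qed.

Lemma flag_edata n v E a b : is_flag n v E -> is_edge n a b ->
  exists z, edata (E a b) (IZR z) (fst (v b)) (1 + fst (v a)) /\
    snd (E a b 0) = snd (v a) /\ snd (E a b 1) = snd (v b).
Proof.
  intros Fl He. destruct Fl as [F1 [F2 [F3 [F4 [_ [_ [_ F8]]]]]]].
  pose proof (F2 a b He) as Hab. pose proof (F8 a b He) as M0.
  destruct (F3 a b He) as [Xc [Yc [Inj [P0 P1]]]].
  pose proof (F4 a b He) as Mo. destruct He as [Ha [Hab' Hb]].
  assert (Ra : 0 < fst (v a) < 1) by (apply F1; lia).
  assert (Rb : 0 < fst (v b) < 1) by (apply F1; lia).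
  rewrite (surjective_pairing (v a)) in P0. rewrite (surjective_pairing (v b)) in P1.
  destruct (edge_norm (E a b) (fst (v a)) (fst (v b)) (snd (v a)) (snd (v b)))
    as [z [Z0 [Z1 Zd]]]; try lra; auto.
  exists z. unfold proj in P0, P1. injection P0 as _ Y0. injection P1 as _ Y1.
  split; [|split; auto].
  constructor; auto. lra.
Qed.

Lemma frac_norm (e : curve) (z : Z) u : frac_part (fst (e u)) = frac_part (fst (e u) - IZR z).
Proof.
  rewrite <- (frac_shift (fst (e u) - IZR z) z). f_equal. ring.
Qed.

Lemma proj_norm (e : curve) (z : Z) u : proj (e u) = (frac_part (fst (e u) - IZR z), snd (e u)).
Proof. unfold proj. rewrite (frac_norm e z u). reflexivity. Qed.

Section Meet.
Variables (n : nat) (v : nat -> pt) (E : nat -> nat -> curve).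
Hypothesis Fl : is_flag n v E.

Lemma vert_relint a b m u : is_edge n a b -> (1 <= m <= n)%nat -> in01o u ->
  proj (E a b u) = v m -> False.
Proof.
  intros He Hm Hu P. destruct Fl as [_ [_ [_ [_ [F5 _]]]]].
  apply (F5 a b m He Hm). exists u. auto.
Qed.

Lemma vert_hgt a b m z lo hi X : is_edge n a b -> (1 <= m <= n)%nat ->
  edata (E a b) (IZR z) lo hi -> lo < X < hi -> frac_part X = fst (v m) ->
  Hgt (E a b) (IZR z) X = snd (v m) -> False.
Proof.
  intros He Hm Dd HX Fx Hy.
  destruct (G_spec _ _ _ _ Dd X ltac:(lra)) as [_ S].
  apply (vert_relint a b m (Ginv (E a b) (IZR z) X) He Hm).
  - apply (G_open _ _ _ _ Dd). lra.
  - rewrite (proj_norm _ z). rewrite S, Fx. unfold Hgt in Hy. rewrite Hy.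
    symmetry. apply surjective_pairing.
Qed.

Lemma meet_point a b c d za zc loe hie lof hif (dz : Z) X :
  edata (E a b) (IZR za) loe hie -> edata (E c d) (IZR zc) lof hif ->
  lof < X < hif -> loe < X + IZR dz < hie ->
  Hgt (E a b) (IZR za) (X + IZR dz) = Hgt (E c d) (IZR zc) X ->
  exists u w, in01o u /\ in01o w /\ proj (E a b u) = proj (E c d w) /\
    fst (proj (E c d w)) = frac_part X.
Proof.
  intros De Df H1 H2 Hh.
  set (u := Ginv (E a b) (IZR za) (X + IZR dz)). set (w := Ginv (E c d) (IZR zc) X).
  destruct (G_spec _ _ _ _ De (X + IZR dz) ltac:(lra)) as [_ S1].
  destruct (G_spec _ _ _ _ Df X ltac:(lra)) as [_ S2].
  exists u, w. split; [apply (G_open _ _ _ _ De); lra|].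
  split; [apply (G_open _ _ _ _ Df); lra|].
  fold u w in S1, S2. unfold Hgt in Hh. fold u w in Hh.
  rewrite (proj_norm _ za), (proj_norm _ zc). fold u w. rewrite S1, S2, Hh.
  rewrite frac_shift. split; reflexivity.
Qed.

Lemma two_meet a b c d (p q : pt) : is_edge n a b -> is_edge n c d -> (a, b) <> (c, d) ->
  on_curve p (E a b) -> on_curve p (E c d) -> on_curve q (E a b) -> on_curve q (E c d) ->
  fst p <> fst q -> False.
Proof.
  intros H1 H2 Hne P1 P2 Q1 Q2 Hf. destruct Fl as [_ [_ [_ [_ [_ [F6 _]]]]]].
  apply Hf. rewrite (F6 a b c d H1 H2 Hne p q P1 P2 Q1 Q2). reflexivity.
Qed.

Lemma two_meetX a b c d za zc loe hie lof hif (d1 d2 : Z) X1 X2 :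
  is_edge n a b -> is_edge n c d -> (a, b) <> (c, d) ->
  edata (E a b) (IZR za) loe hie -> edata (E c d) (IZR zc) lof hif ->
  lof < X1 < hif -> loe < X1 + IZR d1 < hie ->
  Hgt (E a b) (IZR za) (X1 + IZR d1) = Hgt (E c d) (IZR zc) X1 ->
  lof < X2 < hif -> loe < X2 + IZR d2 < hie ->
  Hgt (E a b) (IZR za) (X2 + IZR d2) = Hgt (E c d) (IZR zc) X2 ->
  frac_part X1 <> frac_part X2 -> False.
Proof.
  intros H1 H2 Hne De Df A1 A2 A3 B1 B2 B3 Hf.
  destruct (meet_point a b c d za zc loe hie lof hif d1 X1 De Df A1 A2 A3) as [u1 [w1 [U1 [W1 [E1 F1]]]]].
  destruct (meet_point a b c d za zc loe hie lof hif d2 X2 De Df B1 B2 B3) as [u2 [w2 [U2 [W2 [E2 F2]]]]].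
  apply (two_meet a b c d (proj (E c d w1)) (proj (E c d w2)) H1 H2 Hne).
  - exists u1. unfold in01, in01o in *. split; [lra|auto].
  - exists w1. unfold in01, in01o in *. split; [lra|auto].
  - exists u2. unfold in01, in01o in *. split; [lra|auto].
  - exists w2. unfold in01, in01o in *. split; [lra|auto].
  - rewrite F1, F2. exact Hf.
Qed.

Lemma meet_sides a b c d za zc loe hie lof hif (dz : Z) X :
  is_edge n a b -> is_edge n c d -> (a, b) <> (c, d) ->
  edata (E a b) (IZR za) loe hie -> edata (E c d) (IZR zc) lof hif ->
  lof < X < hif -> loe < X + IZR dz < hie ->
  Hgt (E a b) (IZR za) (X + IZR dz) = Hgt (E c d) (IZR zc) X ->
  forall eta, 0 < eta ->
  (exists X', Rabs (X' - X) < eta /\ lof < X' < hif /\ loe < X' + IZR dz < hie /\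
     Hgt (E a b) (IZR za) (X' + IZR dz) < Hgt (E c d) (IZR zc) X') /\
  (exists X', Rabs (X' - X) < eta /\ lof < X' < hif /\ loe < X' + IZR dz < hie /\
     Hgt (E c d) (IZR zc) X' < Hgt (E a b) (IZR za) (X' + IZR dz)).
Proof.
  intros H1 H2 Hne De Df A1 A2 A3 eta Heta.
  set (u := Ginv (E a b) (IZR za) (X + IZR dz)). set (w := Ginv (E c d) (IZR zc) X).
  destruct (G_spec _ _ _ _ De (X + IZR dz) ltac:(lra)) as [Iu S1].
  destruct (G_spec _ _ _ _ Df X ltac:(lra)) as [Iw S2].
  fold u w in S1, S2, Iu, Iw.
  assert (Ou : in01o u) by (apply (G_open _ _ _ _ De); lra).
  assert (Ow : in01o w) by (apply (G_open _ _ _ _ Df); lra).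
  assert (Pe : proj (E a b u) = proj (E c d w)).
  { unfold Hgt in A3. fold u w in A3.
    rewrite (proj_norm _ za), (proj_norm _ zc). rewrite S1, S2, A3, frac_shift. reflexivity. }
  pose proof Fl as Fl'.
  destruct Fl' as [_ [_ [F3 [_ [F5 [_ [F7 _]]]]]]].
  assert (Oc1 : on_curve (proj (E a b u)) (E a b)) by (exists u; split; auto).
  assert (Oc2 : on_curve (proj (E a b u)) (E c d)) by (exists w; split; auto).
  destruct (F7 a b c d H1 H2 Hne _ Oc1 Oc2) as [[Va Vc]|[s0 [t0 [Cr Ps]]]].
  - exfalso. destruct H1 as [? [? ?]]. destruct H2 as [? [? ?]].
    destruct Va as [Va|Va].
    + apply (vert_relint c d a w ltac:(unfold is_edge; lia) ltac:(lia) Ow). rewrite <- Pe. auto.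
    + apply (vert_relint c d b w ltac:(unfold is_edge; lia) ltac:(lia) Ow). rewrite <- Pe. auto.
  - destruct Cr as [Os0 [Ot0 [Pst [dd [Hdd Sw]]]]].
    destruct (F3 a b H1) as [_ [_ [Inj1 _]]]. destruct (F3 c d H2) as [_ [_ [Inj2 _]]].
    assert (Es : s0 = u).
    { apply Inj1; unfold in01, in01o in *; try lra. rewrite Ps. reflexivity. }
    assert (Et : t0 = w).
    { apply Inj2; unfold in01, in01o in *; try lra. rewrite <- Pst, Ps, Pe. reflexivity. }
    subst s0 t0.
    pose proof (cross_sides (E a b) (IZR za) loe hie (E c d) (IZR zc) lof hif De Df
                 (IZR dz) u w dd Ou Ow Hdd Sw ltac:(lra) eta Heta) as CS.
    rewrite S2 in CS. exact CS.
Qed.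
End Meet.


Lemma endpt n v E a b : is_flag n v E -> is_edge n a b ->
  proj (E a b 0) = v a /\ proj (E a b 1) = v b.
Proof. intros Fl He. destruct Fl as [_ [_ [F3 _]]]. destruct (F3 a b He) as [_ [_ [_ [P0 P1]]]]. auto. Qed.

Lemma nomeet_shared n v E a b c d za zc loe hie lof hif (dz : Z) X m ua uc :
  is_flag n v E -> is_edge n a b -> is_edge n c d -> (a, b) <> (c, d) ->
  edata (E a b) (IZR za) loe hie -> edata (E c d) (IZR zc) lof hif ->
  lof < X < hif -> loe < X + IZR dz < hie ->
  in01 ua -> in01 uc -> proj (E a b ua) = v m -> proj (E c d uc) = v m ->
  frac_part X <> fst (v m) ->
  Hgt (E a b) (IZR za) (X + IZR dz) = Hgt (E c d) (IZR zc) X -> False.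
Proof.
  intros Fl H1 H2 Hne De Df R1 R2 Ia Ic Pa Pc Fx Hh.
  destruct (meet_point E a b c d za zc loe hie lof hif dz X De Df R1 R2 Hh)
    as [u [w [U [W [P F]]]]].
  apply (two_meet n v E Fl a b c d (proj (E c d w)) (v m) H1 H2 Hne).
  - exists u. unfold in01, in01o in *. split; [lra|auto].
  - exists w. unfold in01, in01o in *. split; [lra|auto].
  - exists ua. auto.
  - exists uc. auto.
  - rewrite F. exact Fx.
Qed.

Section Core.
Variables (n : nat) (v : nat -> pt) (E : nat -> nat -> curve) (i j k s t : nat) (sg : R).
Variables (zst zjk zij zks : Z).
Hypothesis Fl : is_flag n v E.
Hypothesis Hi : (1 <= i)%nat.
Hypothesis Hij : (i < j)%nat.
Hypothesis Hjk : (j < k)%nat.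
Hypothesis Hks : (k < s)%nat.
Hypothesis Hst : (s < t)%nat.
Hypothesis Htn : (t <= n)%nat.
Hypothesis Sg : sgn sg.
Local Notation x m := (fst (v m)).
Local Notation y m := (snd (v m)).
Hypothesis Dst : edata (E s t) (IZR zst) (x t) (1 + x s).
Hypothesis Djk : edata (E j k) (IZR zjk) (x k) (1 + x j).
Hypothesis Dij : edata (E i j) (IZR zij) (x j) (1 + x i).
Hypothesis Dks : edata (E k s) (IZR zks) (x s) (1 + x k).
Hypothesis Yst : snd (E s t 0) = y s /\ snd (E s t 1) = y t.
Hypothesis Yjk : snd (E j k 0) = y j /\ snd (E j k 1) = y k.
Hypothesis Yij : snd (E i j 0) = y i /\ snd (E i j 1) = y j.
Hypothesis Yks : snd (E k s 0) = y k /\ snd (E k s 1) = y s.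
Local Notation Gst := (Hgt (E s t) (IZR zst)).
Local Notation Gjk := (Hgt (E j k) (IZR zjk)).
Local Notation Gij := (Hgt (E i j) (IZR zij)).
Local Notation Gks := (Hgt (E k s) (IZR zks)).
Hypothesis BJI : forall X, x k < X < 1 + x i -> sg * Gjk X <= sg * Gij X.
Hypothesis VS : sg * (y s - Gjk (x s)) < 0.
Hypothesis VT : sg * (y t - Gjk (x t)) < 0.

Lemma ord : 0 < x i /\ x i < x j /\ x j < x k /\ x k < x s /\ x s < x t /\ x t < 1.
Proof.
  destruct Fl as [F1 [F2 _]].
  assert (0 < x i < 1) by (apply F1; lia). assert (0 < x t < 1) by (apply F1; lia).
  assert (x i < x j) by (apply F2; unfold is_edge; lia).
  assert (x j < x k) by (apply F2; unfold is_edge; lia).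
  assert (x k < x s) by (apply F2; unfold is_edge; lia).
  assert (x s < x t) by (apply F2; unfold is_edge; lia).
  lra.
Qed.

Lemma sg_cases : sg = 1 \/ sg = -1.
Proof. exact Sg. Qed.

Lemma est : is_edge n s t. Proof. unfold is_edge; lia. Qed.
Lemma ejk : is_edge n j k. Proof. unfold is_edge; lia. Qed.
Lemma eij : is_edge n i j. Proof. unfold is_edge; lia. Qed.
Lemma eks : is_edge n k s. Proof. unfold is_edge; lia. Qed.
Lemma I0 : in01 0. Proof. unfold in01; lra. Qed.
Lemma I1 : in01 1. Proof. unfold in01; lra. Qed.

Lemma noKJ X : x s < X < 1 + x j -> Gks X = Gjk X -> False.
Proof.
  intros HX Hh. pose proof ord as O.
  apply (nomeet_shared n v E k s j k zks zjk (x s) (1 + x k) (x k) (1 + x j) 0 X k 0 1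
    Fl eks ejk ltac:(intro Q; injection Q; lia) Dks Djk ltac:(lra) ltac:(simpl; lra) I0 I1
    (proj1 (endpt n v E k s Fl eks)) (proj2 (endpt n v E j k Fl ejk))).
  - destruct (Rlt_or_le X 1).
    + rewrite frac_lt1 by lra. lra.
    + rewrite frac_lt2 by lra. lra.
  - rewrite Rplus_0_r. exact Hh.
Qed.

Lemma noKS X : x t < X < 1 + x k -> Gks X = Gst X -> False.
Proof.
  intros HX Hh. pose proof ord as O.
  apply (nomeet_shared n v E k s s t zks zst (x s) (1 + x k) (x t) (1 + x s) 0 X s 1 0
    Fl eks est ltac:(intro Q; injection Q; lia) Dks Dst ltac:(lra) ltac:(simpl; lra) I1 I0
    (proj2 (endpt n v E k s Fl eks)) (proj1 (endpt n v E s t Fl est))).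
  - destruct (Rlt_or_le X 1).
    + rewrite frac_lt1 by lra. lra.
    + rewrite frac_lt2 by lra. lra.
  - rewrite Rplus_0_r. exact Hh.
Qed.

Lemma KJ X : x s < X < 1 + x j -> sg * (Gks X - Gjk X) < 0.
Proof.
  intros HX. pose proof ord as O.
  destruct (Rlt_or_le (sg * (Gks X - Gjk X)) 0) as [L|L]; auto. exfalso.
  destruct (end1 (E k s) (IZR zks) (x s) (1 + x k) (E j k) (IZR zjk) (x k) (1 + x j) Dks Djk 0 sg
     ltac:(lra) ltac:(rewrite (proj2 Yks), Rminus_0_r; exact VS) (X - x s) ltac:(lra))
    as [X0 [B1 [B2 [B3 B4]]]].
  rewrite Rplus_0_r in B4.
  destruct (Req_dec (Gks X) (Gjk X)) as [Eq|Ne]; [apply (noKJ X); auto|].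
  destruct (ivt2 (E k s) (IZR zks) (x s) (1 + x k) (E j k) (IZR zjk) (x k) (1 + x j) Dks Djk 0 X0 X)
    as [M [HM EM]].
  - lra.
  - intros Y HY. split; lra.
  - rewrite !Rplus_0_r. destruct Sg as [S|S]; subst sg.
    + left. split; [lra|]. assert (Gks X - Gjk X <> 0) by lra. lra.
    + right. split; [lra|]. assert (Gks X - Gjk X <> 0) by lra. lra.
  - rewrite Rplus_0_r in EM. apply (noKJ M); auto. lra.
Qed.

Lemma KS (HC : sg * (Gst (1 + x k) - y k) < 0) X : x t < X < 1 + x k -> sg * (Gst X - Gks X) < 0.
Proof.
  intros HX. pose proof ord as O.
  destruct (Rlt_or_le (sg * (Gst X - Gks X)) 0) as [L|L]; auto. exfalso.
  assert (Sg' : sgn (- sg)) by (destruct Sg; [right|left]; lra).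
  destruct (end0 (E k s) (IZR zks) (x s) (1 + x k) (E s t) (IZR zst) (x t) (1 + x s) Dks Dst 0 (- sg)
     ltac:(lra) ltac:(rewrite (proj1 Yks), Rminus_0_r; lra) (1 + x k - X) ltac:(lra))
    as [X0 [B1 [B2 [B3 B4]]]].
  rewrite Rplus_0_r in B4. rewrite Rminus_0_r in B1.
  destruct (Req_dec (Gks X) (Gst X)) as [Eq|Ne]; [apply (noKS X); auto|].
  destruct (ivt2 (E k s) (IZR zks) (x s) (1 + x k) (E s t) (IZR zst) (x t) (1 + x s) Dks Dst 0 X X0)
    as [M [HM EM]].
  - lra.
  - intros Y HY. split; lra.
  - rewrite !Rplus_0_r. destruct Sg as [S|S]; subst sg.
    + left. split; [|lra]. assert (Gks X - Gst X <> 0) by lra. lra.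
    + right. split; [|lra]. assert (Gks X - Gst X <> 0) by lra. lra.
  - rewrite Rplus_0_r in EM. apply (noKS M); auto. lra.
Qed.

Lemma IZRm1 : IZR (-1) = -1.
Proof. reflexivity. Qed.

Lemma P_pos X1 : x t < X1 < 1 + x j -> 0 < sg * (Gst X1 - Gjk X1) -> False.
Proof.
  intros HX1 Pos. pose proof ord as O.
  destruct (end1 (E s t) (IZR zst) (x t) (1 + x s) (E j k) (IZR zjk) (x k) (1 + x j) Dst Djk 0 sg
     ltac:(lra) ltac:(rewrite (proj2 Yst), Rminus_0_r; exact VT) (X1 - x t) ltac:(lra))
    as [X0 [B1 [B2 [B3 B4]]]].
  rewrite Rplus_0_r in B4. rewrite Rminus_0_r in B1.
  destruct (ivt2 (E s t) (IZR zst) (x t) (1 + x s) (E j k) (IZR zjk) (x k) (1 + x j) Dst Djk 0 X0 X1)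
    as [M1 [HM1 EM1]].
  - lra.
  - intros Y HY. split; lra.
  - rewrite !Rplus_0_r. destruct Sg as [S|S]; subst sg.
    + left. split; lra.
    + right. split; lra.
  -
    assert (HC : sg * (Gst (1 + x k) - y k) < 0).
    { destruct (Rlt_or_le (sg * (Gst (1 + x k) - y k)) 0) as [L|L]; auto. exfalso.
      destruct (Req_dec (Gst (1 + x k)) (y k)) as [Eq|Ne].
      { apply (vert_hgt n v E Fl s t k zst (x t) (1 + x s) (1 + x k) est ltac:(lia) Dst ltac:(lra)).
        - rewrite frac_lt2 by lra. ring.
        - exact Eq. }
      destruct (end1 (E j k) (IZR zjk) (x k) (1 + x j) (E s t) (IZR zst) (x t) (1 + x s) Djk Dst
         (IZR (-1)) sg ltac:(lra)
         ltac:(rewrite (proj2 Yjk); replace (x k - -1) with (1 + x k) by ring;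
               destruct Sg as [S|S]; subst sg; [|]; assert (Gst (1 + x k) - y k <> 0) by lra; lra)
         ((x s - x k) / 2) ltac:(lra))
        as [Xa [A1 [A2 [A3 A4]]]].

      destruct (end0 (E s t) (IZR zst) (x t) (1 + x s) (E j k) (IZR zjk) (x k) (1 + x j) Dst Djk
         (IZR 1) sg ltac:(simpl; lra)
         ltac:(rewrite (proj1 Yst); replace (1 + x s - IZR 1) with (x s) by (simpl; ring); exact VS)
         ((x s - x k) / 2) ltac:(lra))
        as [Xb [C1 [C2 [C3 C4]]]].
      simpl in C1, C3, C4.
      destruct (ivt2 (E s t) (IZR zst) (x t) (1 + x s) (E j k) (IZR zjk) (x k) (1 + x j) Dst Djk
                 (IZR 1) (Xa - 1) Xb) as [M2 [HM2 EM2]].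
      + lra.
      + intros Y HY. simpl. split; lra.
      + simpl. replace (Xa - 1 + 1) with Xa by ring. replace (Xa + -1) with (Xa - 1) in A4 by ring.
        destruct Sg as [S|S]; subst sg.
        * right. split; lra.
        * left. split; lra.
      + apply (two_meetX n v E Fl s t j k zst zjk (x t) (1 + x s) (x k) (1 + x j) 0 1 M1 M2
                est ejk ltac:(intro Q; injection Q; lia) Dst Djk); try (simpl; lra).
        * rewrite (frac_lt1 M2) by lra.
          destruct (Rlt_or_le M1 1).
          -- rewrite frac_lt1 by lra. lra.
          -- rewrite frac_lt2 by lra. lra. }
    pose proof (KS HC X1 ltac:(lra)). pose proof (KJ X1 ltac:(lra)). lra.
Qed.

Lemma LP X : x t < X < 1 + x j -> sg * (Gst X - Gjk X) < 0.
Proof.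
  intros HX. pose proof ord as O.
  destruct (Rlt_or_le (sg * (Gst X - Gjk X)) 0) as [L|L]; auto. exfalso.
  destruct (Rlt_or_le 0 (sg * (Gst X - Gjk X))) as [L2|L2]; [apply (P_pos X); auto|].
  assert (Eq : Gst (X + IZR 0) = Gjk X).
  { rewrite Rplus_0_r. destruct Sg as [S|S]; rewrite S in L, L2; lra. }
  destruct (meet_sides n v E Fl s t j k zst zjk (x t) (1 + x s) (x k) (1 + x j) 0 X
     est ejk ltac:(intro Q; injection Q; lia) Dst Djk ltac:(lra) ltac:(simpl; lra) Eq
     (Rmin (X - x t) (1 + x j - X)) ltac:(apply Rmin_pos; lra)) as [[Xa [A1 [A2 [A3 A4]]]] [Xb [B1 [B2 [B3 B4]]]]].
  rewrite Rplus_0_r in A4, B4.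
  pose proof (Rmin_l (X - x t) (1 + x j - X)). pose proof (Rmin_r (X - x t) (1 + x j - X)).
  destruct Sg as [S|S].
  - apply (P_pos Xb); [|rewrite S; lra]. apply Rabs_def2 in B1. lra.
  - apply (P_pos Xa); [|rewrite S; lra]. apply Rabs_def2 in A1. lra.
Qed.

Lemma SA X : x t < X < 1 + x i -> sg * (Gst X - Gij X) < 0.
Proof.
  intros HX. pose proof ord as O. pose proof (LP X ltac:(lra)). pose proof (BJI X ltac:(lra)). lra.
Qed.

Lemma S3 : sg * (Gst (1 + x j) - y j) < 0.
Proof.
  pose proof ord as O.
  destruct (Rlt_or_le (sg * (Gst (1 + x j) - y j)) 0) as [L|L]; auto. exfalso.
  destruct (Req_dec (Gst (1 + x j)) (y j)) as [Eq|Ne].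
  { apply (vert_hgt n v E Fl s t j zst (x t) (1 + x s) (1 + x j) est ltac:(lia) Dst ltac:(lra)).
    - rewrite frac_lt2 by lra. ring.
    - exact Eq. }
  destruct (end0 (E j k) (IZR zjk) (x k) (1 + x j) (E s t) (IZR zst) (x t) (1 + x s) Djk Dst 0 sg
     ltac:(lra)
     ltac:(rewrite (proj1 Yjk), Rminus_0_r; assert (Gst (1 + x j) - y j <> 0) by lra;
           destruct Sg as [S|S]; rewrite S in *; lra)
     (1 + x j - x t) ltac:(lra)) as [X0 [B1 [B2 [B3 B4]]]].
  rewrite Rplus_0_r in B4. rewrite Rminus_0_r in B1.
  pose proof (LP X0 ltac:(lra)). lra.
Qed.

Lemma SB_pos X1 : x j < X1 < x s -> 0 < sg * (Gst (X1 + 1) - Gij X1) -> False.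
Proof.
  intros HX1 Pos. pose proof ord as O. pose proof S3 as H3.
  assert (Sg' : sgn (- sg)) by (destruct Sg; [right|left]; lra).
  destruct (end1 (E i j) (IZR zij) (x j) (1 + x i) (E s t) (IZR zst) (x t) (1 + x s) Dij Dst
     (IZR (-1)) (- sg) ltac:(lra)
     ltac:(rewrite (proj2 Yij); replace (x j - -1) with (1 + x j) by ring; lra)
     (X1 - x j) ltac:(lra)) as [Xa [A1 [A2 [A3 A4]]]].
  assert (VSij : sg * (y s - Gij (x s)) < 0).
  { pose proof (BJI (x s) ltac:(lra)). lra. }
  destruct (end0 (E s t) (IZR zst) (x t) (1 + x s) (E i j) (IZR zij) (x j) (1 + x i) Dst Dij
     (IZR 1) sg ltac:(simpl; lra)
     ltac:(rewrite (proj1 Yst); replace (1 + x s - IZR 1) with (x s) by (simpl; ring); exact VSij)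
     (x s - X1) ltac:(lra)) as [Xb [C1 [C2 [C3 C4]]]].
  simpl in C1, C3, C4.
  replace (Xa + -1) with (Xa - 1) in A3, A4 by ring.
  destruct (ivt2 (E s t) (IZR zst) (x t) (1 + x s) (E i j) (IZR zij) (x j) (1 + x i) Dst Dij
             (IZR 1) (Xa - 1) X1) as [Ma [HMa EMa]].
  { lra. } { intros Y HY. simpl. split; lra. }
  { simpl. replace (Xa - 1 + 1) with Xa by ring.
    destruct Sg as [S|S]; rewrite S in *; [left|right]; split; lra. }
  destruct (ivt2 (E s t) (IZR zst) (x t) (1 + x s) (E i j) (IZR zij) (x j) (1 + x i) Dst Dij
             (IZR 1) X1 Xb) as [Mb [HMb EMb]].
  { lra. } { intros Y HY. simpl. split; lra. }
  { simpl. destruct Sg as [S|S]; rewrite S in *; [right|left]; split; lra. }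
  apply (two_meetX n v E Fl s t i j zst zij (x t) (1 + x s) (x j) (1 + x i) 1 1 Ma Mb
            est eij ltac:(intro Q; injection Q; lia) Dst Dij); try (simpl; lra).
  rewrite (frac_lt1 Ma) by lra. rewrite (frac_lt1 Mb) by lra. lra.
Qed.

Lemma SB X : x j < X < x s -> sg * (Gst (X + 1) - Gij X) < 0.
Proof.
  intros HX. pose proof ord as O.
  destruct (Rlt_or_le (sg * (Gst (X + 1) - Gij X)) 0) as [L|L]; auto. exfalso.
  destruct (Rlt_or_le 0 (sg * (Gst (X + 1) - Gij X))) as [L2|L2]; [apply (SB_pos X); auto|].
  assert (Eq : Gst (X + IZR 1) = Gij X).
  { simpl. destruct Sg as [S|S]; rewrite S in L, L2; lra. }
  destruct (meet_sides n v E Fl s t i j zst zij (x t) (1 + x s) (x j) (1 + x i) 1 X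
     est eij ltac:(intro Q; injection Q; lia) Dst Dij ltac:(lra) ltac:(simpl; lra) Eq
     (Rmin (X - x j) (x s - X)) ltac:(apply Rmin_pos; lra)) as [[Xa [A1 [A2 [A3 A4]]]] [Xb [B1 [B2 [B3 B4]]]]].
  simpl in A3, A4, B3, B4.
  pose proof (Rmin_l (X - x j) (x s - X)). pose proof (Rmin_r (X - x j) (x s - X)).
  destruct Sg as [S|S].
  - apply (SB_pos Xb); [|rewrite S; lra]. apply Rabs_def2 in B1. lra.
  - apply (SB_pos Xa); [|rewrite S; lra]. apply Rabs_def2 in A1. lra.
Qed.

Lemma classify u w : in01o u -> in01o w ->
  frac_part (fst (E s t u)) = frac_part (fst (E i j w)) ->
  sg * (snd (E s t u) - snd (E i j w)) < 0.
Proof.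
  intros Hu Hw F. pose proof ord as O.
  pose proof (Xh_open _ _ _ _ Dst u Hu) as Ou. pose proof (Xh_open _ _ _ _ Dij w Hw) as Ow.
  rewrite (frac_norm _ zst), (frac_norm _ zij) in F.
  destruct (frac_eq _ _ F) as [z Z].
  assert (Zb : (-1 < z < 2)%Z).
  { split; apply lt_IZR; lra. }
  assert (Iu : in01 u) by (unfold in01, in01o in *; lra).
  assert (Iw : in01 w) by (unfold in01, in01o in *; lra).
  rewrite <- (H_Xh _ _ _ _ Dst u Iu), <- (H_Xh _ _ _ _ Dij w Iw).
  destruct (Z.eq_dec z 0) as [Z0|Z0].
  - subst z. simpl in Z. rewrite Z, Rplus_0_r. apply SA. rewrite Rplus_0_r in Z. lra.
  - assert (z = 1%Z) by lia. subst z. simpl in Z. rewrite Z. apply SB. lra.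
Qed.

Lemma vdist a b : (1 <= a <= n)%nat -> (1 <= b <= n)%nat -> (a < b)%nat -> v a <> v b.
Proof.
  intros Ha Hb Hab Q. destruct Fl as [_ [F2 _]].
  pose proof (F2 a b ltac:(unfold is_edge; lia)). rewrite Q in H. lra.
Qed.

Lemma in01_cases u : in01 u -> u = 0 \/ u = 1 \/ in01o u.
Proof.
  unfold in01, in01o. intros H.
  destruct (Req_dec u 0); [left; auto|]. destruct (Req_dec u 1); [right; left; auto|].
  right; right; lra.
Qed.

Lemma disj : disjoint_curves (E s t) (E i j).
Proof.
  intros p [u [Iu Pu]] [w [Iw Pw]].
  destruct (endpt n v E s t Fl est) as [Ps0 Ps1]. destruct (endpt n v E i j Fl eij) as [Pi0 Pi1].
  destruct (in01_cases u Iu) as [U|[U|U]]; destruct (in01_cases w Iw) as [W|[W|W]];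
    try (subst u); try (subst w).
  all: try (apply (vdist i s ltac:(lia) ltac:(lia) ltac:(lia)); congruence).
  all: try (apply (vdist j s ltac:(lia) ltac:(lia) ltac:(lia)); congruence).
  all: try (apply (vdist i t ltac:(lia) ltac:(lia) ltac:(lia)); congruence).
  all: try (apply (vdist j t ltac:(lia) ltac:(lia) ltac:(lia)); congruence).
  - apply (vert_relint n v E Fl i j s w eij ltac:(lia) W). congruence.
  - apply (vert_relint n v E Fl i j t w eij ltac:(lia) W). congruence.
  - apply (vert_relint n v E Fl s t i u est ltac:(lia) U). congruence.
  - apply (vert_relint n v E Fl s t j u est ltac:(lia) U). congruence.
  - rewrite <- Pw in Pu. unfold proj in Pu. injection Pu as F Y.
    pose proof (classify u w U W F). rewrite Y in H. lra.
Qed.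

Lemma related : related_curves (E s t) (E i j).
Proof.
  pose proof ord as O. split; [|split].
  - intros [s0 [t0 [Hs0 [Ht0 [Pe _]]]]]. apply disj with (proj (E s t s0)).
    + exists s0. unfold in01, in01o in *. split; [lra|auto].
    + exists t0. unfold in01, in01o in *. split; [lra|auto].
  - set (X := (x t + 1 + x i) / 2).
    exists (Ginv (E s t) (IZR zst) X), (Ginv (E i j) (IZR zij) X).
    split; [apply (G_open _ _ _ _ Dst); unfold X; lra|].
    split; [apply (G_open _ _ _ _ Dij); unfold X; lra|].
    rewrite (frac_norm _ zst), (frac_norm _ zij).
    destruct (G_spec _ _ _ _ Dst X ltac:(unfold X; lra)) as [_ S1].
    destruct (G_spec _ _ _ _ Dij X ltac:(unfold X; lra)) as [_ S2].
    rewrite S1, S2. reflexivity.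
  - destruct Sg as [S|S].
    + left. intros u w Hu Hw F. pose proof (classify u w Hu Hw F). rewrite S in H. lra.
    + right. intros u w Hu Hw F. symmetry in F. pose proof (classify w u Hw Hu F). rewrite S in H. lra.
Qed.

End Core.


Lemma ptG e z xk xj xm w : edata e (IZR z) xk (1 + xj) -> 0 < xj -> xj < xk -> xk < xm -> xm < 1 ->
  in01o w -> frac_part (fst (e w)) = xm -> Hgt e (IZR z) xm = snd (e w).
Proof.
  intros De H1 H2 H3 H4 Hw F.
  pose proof (Xh_open _ _ _ _ De w Hw) as O.
  rewrite (frac_norm _ z) in F.
  destruct (frac_int (fst (e w) - IZR z)) as [z' Z']. rewrite F in Z'.
  assert (Zb : (-1 < z' < 1)%Z) by (split; apply lt_IZR; lra).
  assert (z' = 0%Z) by lia. subst z'. rewrite Rplus_0_r in Z'.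
  rewrite <- Z'. apply (H_Xh _ _ _ _ De). unfold in01, in01o in *; lra.
Qed.

Lemma belowG e ze loe hie f zf lof hif X : edata e (IZR ze) loe hie -> edata f (IZR zf) lof hif ->
  below_all e f -> loe < X < hie -> lof < X < hif -> Hgt e (IZR ze) X <= Hgt f (IZR zf) X.
Proof.
  intros De Df B H1 H2. unfold Hgt. apply B.
  - apply (G_open _ _ _ _ De); lra.
  - apply (G_open _ _ _ _ Df); lra.
  - rewrite (frac_norm _ ze), (frac_norm _ zf).
    destruct (G_spec _ _ _ _ De X ltac:(lra)) as [_ S1].
    destruct (G_spec _ _ _ _ Df X ltac:(lra)) as [_ S2]. rewrite S1, S2. reflexivity.
Qed.

Lemma both n v E i j k s t sg : is_flag n v E -> (1 <= i)%nat -> (i < j)%nat -> (j < k)%nat ->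
  (k < s)%nat -> (s < t)%nat -> (t <= n)%nat -> sgn sg ->
  (forall e1 z1 e2 z2, edata (E j k) (IZR z1) (fst (v k)) (1 + fst (v j)) ->
     edata (E i j) (IZR z2) (fst (v j)) (1 + fst (v i)) ->
     forall X, fst (v k) < X < 1 + fst (v i) ->
     e1 = E j k -> e2 = E i j -> sg * Hgt e1 (IZR z1) X <= sg * Hgt e2 (IZR z2) X) ->
  (forall m, (k < m <= n)%nat -> (m = s \/ m = t) -> exists w, in01o w /\
      frac_part (fst (E j k w)) = fst (v m) /\ sg * (snd (v m) - snd (E j k w)) < 0) ->
  disjoint_curves (E s t) (E i j) /\ related_curves (E s t) (E i j).
Proof.
  intros Fl Hi Hij Hjk Hks Hst Htn Sg BJ VV.
  destruct (flag_edata n v E s t Fl ltac:(unfold is_edge; lia)) as [zst [Dst [Y1 Y2]]].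
  destruct (flag_edata n v E j k Fl ltac:(unfold is_edge; lia)) as [zjk [Djk [Y3 Y4]]].
  destruct (flag_edata n v E i j Fl ltac:(unfold is_edge; lia)) as [zij [Dij [Y5 Y6]]].
  destruct (flag_edata n v E k s Fl ltac:(unfold is_edge; lia)) as [zks [Dks [Y7 Y8]]].
  assert (O : 0 < fst (v i) /\ fst (v i) < fst (v j) /\ fst (v j) < fst (v k) /\
              fst (v k) < fst (v s) /\ fst (v s) < fst (v t) /\ fst (v t) < 1).
  { destruct Fl as [F1 [F2 _]].
    assert (0 < fst (v i) < 1) by (apply F1; lia). assert (0 < fst (v t) < 1) by (apply F1; lia).
    assert (fst (v i) < fst (v j)) by (apply F2; unfold is_edge; lia).
    assert (fst (v j) < fst (v k)) by (apply F2; unfold is_edge; lia).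
    assert (fst (v k) < fst (v s)) by (apply F2; unfold is_edge; lia).
    assert (fst (v s) < fst (v t)) by (apply F2; unfold is_edge; lia). lra. }
  assert (BJI : forall X, fst (v k) < X < 1 + fst (v i) ->
     sg * Hgt (E j k) (IZR zjk) X <= sg * Hgt (E i j) (IZR zij) X).
  { intros X HX. apply (BJ (E j k) zjk (E i j) zij Djk Dij X HX eq_refl eq_refl). }
  assert (VM : forall m, (k < m <= n)%nat -> (m = s \/ m = t) ->
     sg * (snd (v m) - Hgt (E j k) (IZR zjk) (fst (v m))) < 0).
  { intros m Hm Hm'. destruct (VV m Hm Hm') as [w [Hw [F L]]].
    assert (fst (v m) < 1).
    { destruct Fl as [F1 _]. assert (0 < fst (v m) < 1) by (apply F1; lia). lra. }
    assert (fst (v k) < fst (v m)).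
    { destruct Hm' as [->| ->]; lra. }
    rewrite (ptG (E j k) zjk (fst (v k)) (fst (v j)) (fst (v m)) w Djk); auto; lra. }
  split.
  - apply (disj n v E i j k s t sg zst zjk zij zks Fl Hi Hij Hjk Hks Hst Htn Sg Dst Djk Dij Dks
      (conj Y1 Y2) (conj Y3 Y4) (conj Y5 Y6) (conj Y7 Y8) BJI
      (VM s ltac:(lia) (or_introl eq_refl)) (VM t ltac:(lia) (or_intror eq_refl))).
  - apply (related n v E i j k s t sg zst zjk zij zks Fl Hi Hij Hjk Hks Hst Htn Sg Dst Djk Dij Dks
      (conj Y1 Y2) (conj Y3 Y4) (conj Y5 Y6) (conj Y7 Y8) BJI
      (VM s ltac:(lia) (or_introl eq_refl)) (VM t ltac:(lia) (or_intror eq_refl))).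
Qed.

Theorem claim15 (n : nat) (v : nat -> pt) (E : nat -> nat -> curve) (i j k : nat) :
  is_flag n v E -> (1 <= i)%nat -> (i < j)%nat -> (j < k)%nat -> (k <= n)%nat ->
  (good_upper n v E i j k ->
     forall s t, (s < t)%nat -> Vminus n v E j k s -> Vminus n v E j k t ->
       disjoint_curves (E s t) (E i j) /\ related_curves (E s t) (E i j)) /\
  (good_lower n v E i j k ->
     forall s t, (s < t)%nat -> Vplus n v E j k s -> Vplus n v E j k t ->
       disjoint_curves (E s t) (E i j) /\ related_curves (E s t) (E i j)).
Proof.
  intros Fl Hi Hij Hjk Hkn. split.
  - intros [[_ Bel] _] s t Hst [[Hks Hsn] Bs] [[Hkt Htn] Bt].
    apply (both n v E i j k s t 1 Fl Hi Hij Hjk Hks Hst Htn ltac:(left; reflexivity)).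
    + intros e1 z1 e2 z2 D1 D2 X HX -> ->.
      assert (fst (v k) < 1 + fst (v j)) by (pose proof (ed_lohi _ _ _ _ D1); lra).
      pose proof (belowG (E j k) z1 _ _ (E i j) z2 _ _ X D1 D2 Bel).
      assert (fst (v j) < fst (v k)).
      { destruct Fl as [_ [F2 _]]. apply F2. unfold is_edge; lia. }
      assert (0 < fst (v i)).
      { destruct Fl as [F1 _]. assert (0 < fst (v i) < 1) by (apply F1; lia). lra. }
      assert (fst (v i) < fst (v j)).
      { destruct Fl as [_ [F2 _]]. apply F2. unfold is_edge; lia. }
      assert (Hgt (E j k) (IZR z1) X <= Hgt (E i j) (IZR z2) X) by (apply H0; lra). lra.
    + intros m Hm [->| ->].
      * destruct Bs as [w [Hw [F L]]]. exists w. split; [auto|]. split; [auto|]. lra.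
      * destruct Bt as [w [Hw [F L]]]. exists w. split; [auto|]. split; [auto|]. lra.
  - intros [[_ Bel] _] s t Hst [[Hks Hsn] Bs] [[Hkt Htn] Bt].
    apply (both n v E i j k s t (-1) Fl Hi Hij Hjk Hks Hst Htn ltac:(right; reflexivity)).
    + intros e1 z1 e2 z2 D1 D2 X HX -> ->.
      pose proof (belowG (E i j) z2 _ _ (E j k) z1 _ _ X D2 D1 Bel).
      assert (fst (v j) < fst (v k)).
      { destruct Fl as [_ [F2 _]]. apply F2. unfold is_edge; lia. }
      assert (0 < fst (v i)).
      { destruct Fl as [F1 _]. assert (0 < fst (v i) < 1) by (apply F1; lia). lra. }
      assert (fst (v i) < fst (v j)).
      { destruct Fl as [_ [F2 _]]. apply F2. unfold is_edge; lia. }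
      assert (fst (v k) < 1).
      { destruct Fl as [F1 _]. assert (0 < fst (v k) < 1) by (apply F1; lia). lra. }
      assert (Hgt (E i j) (IZR z2) X <= Hgt (E j k) (IZR z1) X) by (apply H; lra). lra.
    + intros m Hm [->| ->].
      * destruct Bs as [w [Hw [F L]]]. exists w. split; [auto|]. split; [auto|]. lra.
      * destruct Bt as [w [Hw [F L]]]. exists w. split; [auto|]. split; [auto|]. lra.
Qed.
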